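(* Let $L$ be a non-abelian finite group. Then every non-abelian subgroup $H$ of $L$ satisfies $C_L(H)\le H$ if and only if every maximal subgroup $M$ of $L$ has the property that each non-abelian subgroup $H$ of $M$ satisfies $C_M(H)\le H$, and $Z(L)\le\Phi(L)$.
   Context: $C_L(H)$ denotes the centralizer, $Z(L)$ the center and $\Phi(L)$ the Frattini subgroup of $L$. *)

(* Defs.v *)
From mathcomp Require Import all_boot all_fingroup all_solvable.
Set Implicit Arguments. Unset Strict Implicit. Unset Printing Implicit Defensive.
Local Open Scope group_scope.

Definition nonab_selfcent (gT : finGroupType) (G : {set gT}) : Prop :=
  forall H : {group gT}, H \subset G -> ~~ abelian H -> 'C_G(H) \subset H.

(* Main.v *)
Require Import Defs.
From mathcomp Require Import all_boot all_fingroup all_solvable.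
Local Open Scope group_scope.

Theorem corollary6p3 (gT : finGroupType) (L : {group gT}) :
  ~~ abelian L ->
  (nonab_selfcent L <->
   ((forall M : {group gT}, maximal M L -> nonab_selfcent M)
    /\ 'Z(L) \subset 'Phi(L))).
Proof.
move=> nabL; split.
- move=> P; split.
  + move=> M maxM H sHM nabH.
    have sML : M \subset L := proper_sub (maxgroupp maxM).
    apply: subset_trans (P H (subset_trans sHM sML) nabH).
    exact: setSI.
  + apply/bigcapsP => M /orP[/eqP-> | maxM]; first exact: center_sub.
    apply/idPn => nZM.
    have sML : M \subset L := proper_sub (maxgroupp maxM).
    have eL : (M <*> 'Z(L))%G = L.
      case/maxgroupP: maxM => _ mx.
      have sJL : M <*> 'Z(L) \subset L by rewrite join_subG sML center_sub.
      have [eq|neq] := eqVneq (M <*> 'Z(L)) (L : {set gT}).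
        by apply/val_inj.
      have := mx (M <*> 'Z(L))%G; rewrite /= properEneq neq sJL joing_subl.
      move=> /(_ isT isT) eqM.
      by case/negP: nZM; rewrite -eqM /= joing_subr.
    have sZCM : 'Z(L) \subset 'C(M).
      apply: subset_trans (subsetIr L 'C(L)) _; exact: centS.
    have nabM : ~~ abelian M.
      apply: contra nabL => abM.
      by rewrite -eL /= abelianY abM center_abelian sZCM.
    have := P M sML nabM.
    have sZC : 'Z(L) \subset 'C_L(M) by rewrite subsetI center_sub sZCM.
    by move=> /(subset_trans sZC); apply/negP.
- case=> PM sZPhi H sHL nabH.
  apply/subsetP => x /setIP[xL cHx].
  have [eHL|[M maxM sHM]] := maximal_exists sHL.
    by rewrite eHL.
  have sJL : H <*> <[x]> \subset L by rewrite join_subG sHL cycle_subG.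
  have [eJ|[M' maxM' sJM']] := maximal_exists sJL.
  +
    have xZ : x \in 'Z(L).
      rewrite inE xL -eJ /= centY inE cHx cent_cycle.
      by rewrite /= cent1id.
    have xM : x \in M.
      by apply: (subsetP (Phi_sub_max maxM)); apply: (subsetP sZPhi).
    apply: (subsetP (PM M maxM H sHM nabH)).
    by rewrite inE xM cHx.
  + have sHM' : H \subset M' := subset_trans (joing_subl _ _) sJM'.
    have xM' : x \in M'.
      by rewrite -cycle_subG; exact: subset_trans (joing_subr _ _) sJM'.
    apply: (subsetP (PM M' maxM' H sHM' nabH)).
    by rewrite inE xM' cHx.
Qed.
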